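(* Let $\bar{B}>0$, $\gamma>0$, $p\in(0,1]$, and let $\{E_t\}_{t\ge1}$ be i.i.d. with $E_t=\bar{B}$ with probability $p$ and $E_t=0$ with probability $1-p$. Consider the policy $g_t=p\,b_t$, where $b_1=\bar{B}$ and $b_t=\min\{b_{t-1}-g_{t-1}+E_t,\bar{B}\}$ for $t\ge2$. Then, with $\mu=p\bar{B}$ and $\mathscr{T}_n(\mathbf{g})=\frac{1}{n}\mathbb{E}\big[\sum_{t=1}^n\frac12\log_2(1+\gamma g_t)\big]$, \[ \liminf_{n\to\infty}\mathscr{T}_n(\mathbf{g})\geq \frac{1}{2}\cdot\frac{1}{2}\log_2(1+\gamma\mu). \]
   Context: Energy harvesting channel with battery capacity $\bar B$, battery level $b_t$, allocated energy $g_t$ at time $t$ and rate $\frac12\log_2(1+\gamma g_t)$; expectation over the energy arrivals. *)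

(* Defs.v *)
From Stdlib Require Import Reals List.
From Coquelicot Require Import Coquelicot.
Import ListNotations.
Open Scope R_scope.

Definition log2 (x : R) : R := ln x / ln 2.

(** All arrival patterns of length n: bit k = true means E_{k+1} = Bbar. *)
Fixpoint all_patterns (n : nat) : list (list bool) :=
  match n with
  | O => [nil]
  | S k => flat_map (fun l => [true :: l; false :: l]) (all_patterns k)
  end.

Definition pattern_prob (p : R) (l : list bool) : R :=
  fold_right Rmult 1 (map (fun b : bool => if b then p else 1 - p) l).

(** Energy arrival E_{k+1} (0-based index k) determined by the pattern. *)
Definition arrival (Bbar : R) (w : nat -> bool) (k : nat) : R :=
  if w k then Bbar else 0.

(** Battery level b_{k+1} (0-based index k) under the policy g_t = p b_t:
    b_1 = Bbar, b_t = min(b_{t-1} - g_{t-1} + E_t, Bbar). *)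
Fixpoint battery (Bbar p : R) (E : nat -> R) (k : nat) : R :=
  match k with
  | O => Bbar
  | S j => Rmin (battery Bbar p E j - p * battery Bbar p E j + E (S j)) Bbar
  end.

Definition alloc (Bbar p : R) (E : nat -> R) (k : nat) : R :=
  p * battery Bbar p E k.

Definition total_rate (Bbar p gamma : R) (E : nat -> R) (n : nat) : R :=
  fold_right Rplus 0
    (map (fun k => / 2 * log2 (1 + gamma * alloc Bbar p E k)) (seq 0 n)).

(** T_n(g) = (1/n) E[ sum_{t=1}^n (1/2) log2(1 + gamma g_t) ], the expectation
    over i.i.d. arrivals E_1..E_n written as the finite sum over all patterns. *)
Definition throughput (Bbar p gamma : R) (n : nat) : R :=
  / INR n *
  fold_right Rplus 0
    (map (fun l => pattern_prob p l *
                   total_rate Bbar p gamma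
                     (arrival Bbar (fun k => nth k l false)) n)
         (all_patterns n)).

(* Main.v *)
Require Import Defs.
From Stdlib Require Import Reals List Lra Lia.
From Coquelicot Require Import Coquelicot.
Import ListNotations.
Open Scope R_scope.

Definition EE (p : R) (n : nat) (F : list bool -> R) : R :=
  fold_right Rplus 0 (map (fun l => pattern_prob p l * F l) (all_patterns n)).

Lemma EE_S_aux p (F : list bool -> R) (L : list (list bool)) :
  fold_right Rplus 0 (map (fun l => pattern_prob p l * F l)
     (flat_map (fun l => [true :: l; false :: l]) L)) =
  fold_right Rplus 0 (map (fun l => pattern_prob p l *
      (p * F (true :: l) + (1 - p) * F (false :: l))) L).
Proof.
  induction L as [|l L IH]; simpl; auto.
  rewrite IH. unfold pattern_prob; simpl. ring.
Qed.

Lemma EE_S p n F : EE p (S n) F =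
  EE p n (fun l => p * F (true :: l) + (1 - p) * F (false :: l)).
Proof. unfold EE. simpl. apply EE_S_aux. Qed.

Lemma EE_0 p F : EE p 0 F = F nil.
Proof. unfold EE, pattern_prob; simpl. ring. Qed.

Section E.
Variable p : R.
Hypothesis hp0 : 0 <= p.
Hypothesis hp1 : p <= 1.

Lemma EE_mono n : forall F G, (forall l, F l <= G l) -> EE p n F <= EE p n G.
Proof.
  induction n as [|n IH]; intros F G H.
  - rewrite !EE_0. apply H.
  - rewrite !EE_S. apply IH. intro l.
    pose proof (H (true :: l)); pose proof (H (false :: l)).
    apply Rplus_le_compat; apply Rmult_le_compat_l; lra.
Qed.

Lemma EE_ext n F G : (forall l, F l = G l) -> EE p n F = EE p n G.
Proof.
  intros H; apply Rle_antisym; apply EE_mono; intro l; rewrite H; lra.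
Qed.

Lemma EE_lin n : forall F G a b,
  EE p n (fun l => a * F l + b * G l) = a * EE p n F + b * EE p n G.
Proof.
  induction n as [|n IH]; intros F G a b.
  - rewrite !EE_0. ring.
  - rewrite !EE_S.
    rewrite (EE_ext n _ (fun l => a * (p * F (true :: l) + (1 - p) * F (false :: l))
        + b * (p * G (true :: l) + (1 - p) * G (false :: l)))).
    + apply IH.
    + intro; ring.
Qed.

Lemma EE_const n c : EE p n (fun _ => c) = c.
Proof.
  induction n as [|n IH].
  - rewrite EE_0; auto.
  - rewrite EE_S. rewrite (EE_ext n _ (fun _ => c)); auto. intro; ring.
Qed.

Fixpoint G (c : R) (m : nat) (l : list bool) : R :=
  match m with
  | O => c
  | S m' => match l with
            | nil => G ((1 - p) * c) m' nil
            | b :: l' => G (if b then 1 else (1 - p) * c) m' l'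
            end
  end.

Definition alpha := / (2 - p).
Definition q := (1 - p) * (1 - p).

Lemma EE_G n : forall m c, (m <= n)%nat ->
  alpha + q ^ m * (c - alpha) <= EE p n (G c m).
Proof.
  unfold alpha, q.
  induction n as [|n IH]; intros m c Hm.
  - assert (m = 0%nat) by lia. subst. rewrite EE_0. simpl. lra.
  - destruct m as [|m].
    + rewrite (EE_ext _ _ (fun _ => c)) by reflexivity. rewrite EE_const. simpl; lra.
    + rewrite EE_S. simpl G.
      rewrite (EE_lin n (G 1 m) (G ((1 - p) * c) m) p (1 - p)).
      pose proof (IH m 1 ltac:(lia)). pose proof (IH m ((1-p)*c) ltac:(lia)).
      apply Rle_trans with (p * (/ (2 - p) + ((1 - p) * (1 - p)) ^ m * (1 - / (2 - p)))
        + (1 - p) * (/ (2 - p) + ((1 - p) * (1 - p)) ^ m * ((1 - p) * c - / (2 - p)))).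
      * right. simpl. field. lra.
      * apply Rplus_le_compat; apply Rmult_le_compat_l; lra.
Qed.


Fixpoint Y (c : R) (w : nat -> bool) (k : nat) : R :=
  match k with
  | O => c
  | S j => if w (S j) then 1 else (1 - p) * Y c w j
  end.

Lemma Y_bound c w k : 0 <= c <= 1 -> 0 <= Y c w k <= 1.
Proof.
  intro Hc. induction k as [|k IH]; simpl; auto.
  destruct (w (S k)); [lra|]. split; nra.
Qed.

Lemma Y_shift m : forall c w,
  Y c w (S m) = Y (if w 1%nat then 1 else (1 - p) * c) (fun i => w (S i)) m.
Proof.
  induction m as [|m IH]; intros c w; [reflexivity|].
  change (Y c w (S (S m))) with
    (if w (S (S m)) then 1 else (1 - p) * Y c w (S m)).
  rewrite IH. reflexivity.
Qed.

Lemma Y_ext c w w' k : (forall i, w i = w' i) -> Y c w k = Y c w' k.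
Proof.
  intro H. induction k as [|k IH]; simpl; auto. rewrite H, IH; auto.
Qed.

Lemma Y_ext' c w w' k : (forall i, w (S i) = w' (S i)) -> Y c w k = Y c w' k.
Proof.
  intro H. induction k as [|k IH]; simpl; auto. rewrite H, IH; auto.
Qed.

Lemma G_Y m : forall c l b0, G c m l = Y c (fun i => nth i (b0 :: l) false) m.
Proof.
  induction m as [|m IH]; intros c l b0; [reflexivity|].
  rewrite Y_shift. destruct l as [|b l].
  - simpl. rewrite (IH _ nil false). apply Y_ext.
    intros [|[|i]]; reflexivity.
  - simpl. rewrite (IH _ l b). reflexivity.
Qed.

End E.
Lemma ln_le_m1 x : 0 < x -> ln x <= x - 1.
Proof. intro H. pose proof (exp_ineq1_le (ln x)). rewrite exp_ln in H0; lra. Qed.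

Lemma ln_conc a Y : 0 <= a -> 0 <= Y <= 1 -> Y * ln (1 + a) <= ln (1 + a * Y).
Proof.
  intros Ha HY.
  assert (Hu : 0 < 1 + a * Y) by nra.
  assert (H1 : ln (1 + a) - ln (1 + a * Y) <= a * (1 - Y) / (1 + a * Y)).
  { assert (Hr : 0 < (1 + a) / (1 + a * Y)) by (apply Rdiv_lt_0_compat; lra).
    replace (1 + a) with ((1 + a) / (1 + a * Y) * (1 + a * Y)) at 1 by (field; lra).
    rewrite ln_mult by lra.
    pose proof (ln_le_m1 _ Hr).
    apply Rle_trans with ((1 + a) / (1 + a * Y) - 1); [lra|].
    right. field. lra. }
  assert (H2 : a * Y / (1 + a * Y) <= ln (1 + a * Y)).
  { pose proof (ln_le_m1 (/ (1 + a * Y)) ltac:(apply Rinv_0_lt_compat; lra)).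
    rewrite ln_Rinv in H by lra.
    apply Rle_trans with (- (/ (1 + a * Y) - 1)); [right; field; lra | lra]. }
  assert (H3 : Y * (a * (1 - Y) / (1 + a * Y)) = (1 - Y) * (a * Y / (1 + a * Y))).
  { field; lra. }
  assert (Y * (ln (1 + a) - ln (1 + a * Y)) <= Y * (a * (1 - Y) / (1 + a * Y))).
  { apply Rmult_le_compat_l; lra. }
  assert ((1 - Y) * (a * Y / (1 + a * Y)) <= (1 - Y) * ln (1 + a * Y)).
  { apply Rmult_le_compat_l; lra. }
  nra.
Qed.

Lemma battery_Y Bbar p w k : 0 < Bbar -> 0 <= p <= 1 ->
  battery Bbar p (arrival Bbar w) k = Bbar * Y p 1 w k.
Proof.
  intros HB Hp. induction k as [|k IH]; simpl; [ring|].
  rewrite IH. pose proof (Y_bound p ltac:(lra) ltac:(lra) 1 w k ltac:(lra)).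
  assert (0 <= Bbar * Y p 1 w k) by (apply Rmult_le_pos; lra).
  assert (0 <= Bbar * Y p 1 w k * (1 - p)) by (apply Rmult_le_pos; lra).
  assert (Bbar * Y p 1 w k <= Bbar) by nra.
  unfold arrival. destruct (w (S k)).
  - rewrite Rmin_right; [ring|]. nra.
  - rewrite Rmin_left; [ring|]. nra.
Qed.

Lemma rate_bound Bbar p gamma w k : 0 < Bbar -> 0 < gamma -> 0 <= p <= 1 ->
  Y p 1 w k * (/ 2 * log2 (1 + gamma * (p * Bbar))) <=
  / 2 * log2 (1 + gamma * alloc Bbar p (arrival Bbar w) k).
Proof.
  intros HB Hg Hp. unfold alloc. rewrite battery_Y by lra.
  pose proof (Y_bound p ltac:(lra) ltac:(lra) 1 w k ltac:(lra)).
  pose proof (ln_conc (gamma * (p * Bbar)) (Y p 1 w k)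
     ltac:(apply Rmult_le_pos; [lra|apply Rmult_le_pos; lra]) H).
  unfold log2.
  replace (gamma * (p * (Bbar * Y p 1 w k))) with (gamma * (p * Bbar) * Y p 1 w k) by ring.
  assert (0 < ln 2) by (pose proof ln_lt_2; lra).
  apply Rle_trans with (/ 2 * (Y p 1 w k * ln (1 + gamma * (p * Bbar)) / ln 2)).
  - right. field. lra.
  - apply Rmult_le_compat_l; [lra|]. unfold Rdiv. apply Rmult_le_compat_r; [|auto].
    left; apply Rinv_0_lt_compat; auto.
Qed.

Theorem proposition4 (Bbar gamma p : R)
  (hB : 0 < Bbar) (hg : 0 < gamma) (hp0 : 0 < p) (hp1 : p <= 1) :
  Rbar_le (Finite (/ 2 * (/ 2 * log2 (1 + gamma * (p * Bbar)))))
          (LimInf_seq (fun n => throughput Bbar p gamma n)).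
Proof.
  set (f := / 2 * log2 (1 + gamma * (p * Bbar))).
  assert (Hf : 0 <= f).
  { unfold f, log2. assert (0 < ln 2) by (pose proof ln_lt_2; lra).
    assert (0 <= ln (1 + gamma * (p * Bbar))).
    { rewrite <- ln_1. apply ln_le; [lra|].
      assert (0 <= gamma * (p * Bbar)) by (apply Rmult_le_pos; [lra|apply Rmult_le_pos; lra]).
      lra. }
    apply Rmult_le_pos; [lra|]. unfold Rdiv. apply Rmult_le_pos; auto.
    left; apply Rinv_0_lt_compat; auto. }
  assert (Ha : / 2 <= alpha p).
  { unfold alpha. apply Rinv_le_contravar; lra. }
  assert (Hk : forall n k, (k < n)%nat ->
     alpha p * f <= EE p n (fun l => / 2 * log2 (1 + gamma *
          alloc Bbar p (arrival Bbar (fun i => nth i l false)) k))).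
  { intros n k Hkn. destruct n as [|n]; [lia|].
    apply Rle_trans with (EE p (S n) (fun l => f * Y p 1 (fun i => nth i l false) k)).
    - rewrite EE_S.
      rewrite (EE_ext p ltac:(lra) ltac:(lra) n _ (fun l => f * G p 1 k l)).
      + rewrite (EE_ext p ltac:(lra) ltac:(lra) n _ (fun l => f * G p 1 k l + 0 * G p 1 k l))
          by (intro; ring).
        rewrite EE_lin by lra.
        pose proof (EE_G p ltac:(lra) ltac:(lra) n k 1 ltac:(lia)).
        assert (0 <= q p ^ k) by (apply pow_le; unfold q; nra).
        assert (alpha p <= 1) by (unfold alpha; rewrite <- Rinv_1; apply Rinv_le_contravar; lra).
        assert (alpha p <= EE p n (G p 1 k)) by nra.
        rewrite Rmult_comm. nra.
      + intro l. rewrite (G_Y p k 1 l true).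
        rewrite (Y_ext' p 1 (fun i => nth i (false :: l) false) (fun i => nth i (true :: l) false))
          by (intros i; reflexivity).
        ring.
    - apply EE_mono; try lra. intro l. rewrite Rmult_comm. apply rate_bound; lra. }
  assert (Hsum : forall n s, (forall k, In k s -> (k < n)%nat) ->
     INR (length s) * (alpha p * f) <= EE p n (fun l => fold_right Rplus 0
       (map (fun k => / 2 * log2 (1 + gamma *
          alloc Bbar p (arrival Bbar (fun i => nth i l false)) k)) s))).
  { intros n s. induction s as [|k s IH]; intro Hin.
    - simpl. rewrite EE_const by lra. lra.
    - simpl map. simpl fold_right.
      rewrite (EE_ext p ltac:(lra) ltac:(lra) n _ (fun l => 1 * (/ 2 * log2 (1 + gamma *
          alloc Bbar p (arrival Bbar (fun i => nth i l false)) k)) + 1 * fold_right Rplus 0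
       (map (fun k => / 2 * log2 (1 + gamma *
          alloc Bbar p (arrival Bbar (fun i => nth i l false)) k)) s))) by (intro; ring).
      rewrite EE_lin by lra.
      pose proof (Hk n k (Hin k (or_introl eq_refl))).
      pose proof (IH (fun k' H => Hin k' (or_intror H))).
      rewrite length_cons, S_INR. lra. }
  apply Rbar_le_trans with (LimInf_seq (fun _ => f / 2)).
  - rewrite LimInf_seq_const. simpl. unfold f. lra.
  - apply LimInf_le. exists 1%nat. intros n Hn.
    unfold throughput.
    pose proof (Hsum n (seq 0 n) ltac:(intros k Hk'; apply in_seq in Hk'; lia)).
    change (fold_right Rplus 0 (map (fun l => pattern_prob p l *
       total_rate Bbar p gamma (arrival Bbar (fun k => nth k l false)) n) (all_patterns n)))
     with (EE p n (fun l => total_rate Bbar p gamma (arrival Bbar (fun k => nth k l false)) n)).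
    unfold total_rate. rewrite length_seq in H.
    assert (0 < INR n) by (apply lt_0_INR; lia).
    apply Rle_trans with (/ INR n * (INR n * (alpha p * f))).
    + replace (/ INR n * (INR n * (alpha p * f))) with (alpha p * f) by (field; lra).
      nra.
    + apply Rmult_le_compat_l; [left; apply Rinv_0_lt_compat; lra | exact H].
Qed.
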